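(* Let $k$ be a field, $R=k[x_1,\ldots,x_n]$ localized at $(x_1,\ldots,x_n)$, and let $\Delta$ be a tree with vertex set $\{x_1,\ldots,x_n\}$ and facet ideal $I=\mathcal{F}(\Delta)$. Then $I$ satisfies condition $\mathcal{F}_1$, i.e. $\mu(I_p)\le\dim R_p$ for every prime ideal $p$ of $R$ with $I\subseteq p$, where $\mu$ denotes the minimal number of generators.
   Context: A simplicial complex on a vertex set $V$ is a collection of subsets of $V$ containing all singletons and closed under subsets; its facets are its maximal faces. Vertices are identified with variables. The facet ideal $\mathcal{F}(\Delta)$ is generated by $\prod_{x_j\in F}x_j$, $F$ a facet. A subcomplex of $\Delta$ is a simplicial complex whose facet set is a subset of that of $\Delta$. $\Delta$ is connected if any two facets are joined by a chain of facets with consecutive members intersecting. A facet $F$ is a leaf if either $F$ is the only facet, or there is a facet $G\neq F$ with $F\cap F'\subseteq F\cap G$ for every facet $F'\neq F$. A connected $\Delta$ is a tree if every nonempty subcomplex has a leaf. *)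

(* Defs.v *)
From HB Require Import structures.
From mathcomp Require Import all_boot all_order all_algebra.
From mathcomp Require Export mpoly.
Set Implicit Arguments. Unset Strict Implicit. Unset Printing Implicit Defensive.
Import GRing.Theory.
Local Open Scope ring_scope.

(* Vertex x_i is identified with i : 'I_n.  A simplicial complex is
   represented by its set of facets F : {set {set 'I_n}}. *)

Definition is_complex (n : nat) (F : {set {set 'I_n}}) : Prop :=
  (forall A B, A \in F -> B \in F -> A \subset B -> A = B) /\
  (forall v : 'I_n, exists2 A, A \in F & v \in A).

Definition is_leaf (n : nat) (G : {set {set 'I_n}}) (A : {set 'I_n}) : Prop :=
  A \in G /\
  (G = [set A] \/
   exists2 B, (B \in G) && (B != A) &
     forall A', A' \in G -> A' != A -> A :&: A' \subset A :&: B).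

Definition facet_adj (n : nat) (F : {set {set 'I_n}}) : rel {set 'I_n} :=
  fun A B => [&& A \in F, B \in F & A :&: B != set0].

Definition connected_complex (n : nat) (F : {set {set 'I_n}}) : Prop :=
  forall A B, A \in F -> B \in F -> connect (facet_adj F) A B.

Definition is_tree (n : nat) (F : {set {set 'I_n}}) : Prop :=
  is_complex F /\ connected_complex F /\
  forall G : {set {set 'I_n}}, G \subset F -> G != set0 ->
    exists A, is_leaf G A.

Section Ideals.
Variables (k : fieldType) (n : nat).
Local Notation P := {mpoly k[n]}.

Definition in_span (s : seq P) (f : P) : Prop :=
  exists a : nat -> P, f = \sum_(i < size s) a i * s`_i.

Definition prime_ideal (J : P -> Prop) : Prop :=
  [/\ J 0,
      (forall f g, J f -> J g -> J (f + g)),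
      (forall r f, J f -> J (r * f)),
      ~ J 1 &
      (forall f g, J (f * g) -> J f \/ J g)].

Definition var_ideal (f : P) : Prop :=
  in_span [seq 'X_i | i <- enum 'I_n] f.

Definition facet_monom (A : {set 'I_n}) : P := \prod_(i in A) 'X_i.

Definition facet_ideal (F : {set {set 'I_n}}) (f : P) : Prop :=
  in_span [seq facet_monom A | A <- enum F] f.

(* In the localization k[x]_Q, the ideal J_Q is generated by (the images of)
   the list g of elements of J: for every f in J there is t not in Q with
   t * f in the ideal (g) of k[x].  (Generators of J_Q can always be taken to
   be elements of J, denominators being units.) *)
Definition loc_generates (J Q : P -> Prop) (g : seq P) : Prop :=
  (forall x, x \in g -> J x) /\
  (forall f, J f -> exists2 t, ~ Q t & in_span g (t * f)).

Definition height_ge (Q : P -> Prop) (h : nat) : Prop :=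
  exists c : nat -> P -> Prop,
    [/\ (forall i, (i <= h)%N -> prime_ideal (c i)),
        (forall i, (i < h)%N ->
           (forall f, c i f -> c i.+1 f) /\ exists f, c i.+1 f /\ ~ c i f) &
        (forall f, c h f <-> Q f)].

End Ideals.

(* Main.v *)
Require Import Defs.
From mathcomp Require Import all_boot all_algebra.
From mathcomp Require Import mpoly.
From mathcomp Require Import ring.
From Stdlib Require ClassicalEpsilon.
Set Implicit Arguments. Unset Strict Implicit. Unset Printing Implicit Defensive.
Import GRing.Theory.
Local Open Scope ring_scope.

Lemma core n (F : {set {set 'I_n}}) :
  (forall G : {set {set 'I_n}}, G \subset F -> G != set0 -> exists A, is_leaf G A) ->
  forall N (G : {set {set 'I_n}}) (S : {set 'I_n}), (#|G| <= N)%N -> G \subset F ->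
  (forall B, B \in G -> B :&: S != set0) ->
  exists2 G' : {set {set 'I_n}}, G' \subset G & (#|G'| <= #|S|)%N /\
     forall B, B \in G -> exists2 C, C \in G' & C :&: S \subset B.
Proof.
move=> leafy; elim=> [|N IH] G S hG sGF hS.
  move: hG; rewrite leqn0 cards_eq0 => /eqP ->.
  by exists set0; rewrite ?sub0set ?cards0 //; split=> // B; rewrite inE.
have [->|G0] := eqVneq G set0.
  by exists set0; rewrite ?sub0set ?cards0 //; split=> // B; rewrite inE.
have [A [AG hA]] := leafy G sGF G0.
have [/existsP [v /andP [vAS /forallP free]] | nofree] :=
  boolP [exists v, (v \in A :&: S) && [forall A', (A' \in G) ==> (A' != A) ==> (v \notin A')]].
- have vS : v \in S by move: vAS; rewrite inE => /andP [].
  have eqI : forall B, B \in G -> B != A -> B :&: (S :\ v) = B :&: S.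
    move=> B BG BA; apply/setP=> x; rewrite !inE.
    case: (eqVneq x v) => [->|] //=.
    by have := free B; rewrite BG BA /= => /negbTE ->.
  have hG0 : (#|G :\ A| <= N)%N.
    by move: hG; rewrite (cardsD1 A G) AG.
  have sG0F : G :\ A \subset F by apply: subset_trans sGF; apply: subsetDl.
  have hS0 : forall B, B \in G :\ A -> B :&: (S :\ v) != set0.
    by move=> B; rewrite !inE => /andP [BA BG]; rewrite eqI // hS.
  have [G1 sG1 [cG1 covG1]] := IH _ _ hG0 sG0F hS0.
  exists (A |: G1).
    apply/subsetP=> x; rewrite in_setU1 => /orP [/eqP ->//|/(subsetP sG1)].
    by rewrite inE => /andP [].
  split.
    rewrite cardsU1; move: cG1; rewrite (cardsD1 v S) vS.
    by case: (A \notin G1) => /=; rewrite ?add1n ?add0n // => /leqW.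
  move=> B BG; have [->|BA] := eqVneq B A.
    by exists A; rewrite ?setU11 // subsetIl.
  have BG0 : B \in G :\ A by rewrite !inE BA.
  have [C CG1 CB] := covG1 B BG0; exists C; first by rewrite inE CG1 orbT.
  have := subsetP sG1 C CG1; rewrite !inE => /andP [CA CG].
  by rewrite -eqI.
- move: nofree => /existsPn nofree.
  have ASsub : forall v, v \in A :&: S -> exists2 A', (A' \in G) && (A' != A) & v \in A'.
    move=> v vAS; have := nofree v; rewrite vAS /= => /forallPn [A'].
    rewrite !negb_imply => /andP [A'G /andP [A'A /negPn vA']].
    by move: vA'; rewrite negbK andbT => vA'; exists A'; rewrite ?A'G ?A'A.
  case: hA => [GA | [B /andP [BG BA] hB]].
  + have /set0Pn [v vAS] := hS A AG.
    have [A' /andP [A'G A'A] _] := ASsub v vAS.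
    by move: A'G A'A; rewrite GA inE => ->.
  have ASB : A :&: S \subset B.
    apply/subsetP=> v vAS; have [A' /andP [A'G A'A] vA'] := ASsub v vAS.
    have : v \in A :&: A'.
      by rewrite inE vA' andbT; move: vAS; rewrite inE => /andP [].
    by move/(subsetP (hB A' A'G A'A)); rewrite inE => /andP [].
  have hG1 : (#|G :\ B| <= N)%N by move: hG; rewrite (cardsD1 B G) BG.
  have sG1F : G :\ B \subset F by apply: subset_trans sGF; apply: subsetDl.
  have hS1 : forall B', B' \in G :\ B -> B' :&: S != set0.
    by move=> B'; rewrite !inE => /andP [_ /hS].
  have [G1 sG1 [cG1 covG1]] := IH _ _ hG1 sG1F hS1.
  exists G1; first by apply: subset_trans sG1 (subsetDl _ _).
  split=> // B' B'G.
  have [->|B'B] := eqVneq B' B.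
    have AG1 : A \in G :\ B by rewrite !inE AG eq_sym BA.
    have [C CG1 CA] := covG1 A AG1; exists C => //.
    apply: subset_trans ASB; rewrite subsetI CA.
    by apply: subset_trans (subsetIr C S).
  by apply: covG1; rewrite !inE B'B.
Qed.

Section Alg.
Variables (k : fieldType) (n : nat).
Local Notation P := {mpoly k[n]}.

Lemma span0 (s : seq P) : in_span s 0.
Proof. by exists (fun _ => 0); rewrite big1 // => i _; rewrite mul0r. Qed.

Lemma spanD (s : seq P) f g : in_span s f -> in_span s g -> in_span s (f + g).
Proof.
move=> [a ->] [b ->]; exists (fun i => a i + b i).
by rewrite -big_split; apply: eq_bigr => i _; rewrite mulrDl.
Qed.

Lemma spanM (s : seq P) r f : in_span s f -> in_span s (r * f).
Proof.
move=> [a ->]; exists (fun i => r * a i).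
by rewrite mulr_sumr; apply: eq_bigr => i _; rewrite mulrA.
Qed.

Lemma span_mem (s : seq P) x : x \in s -> in_span s x.
Proof.
move=> xs; exists (fun i => if i == index x s then 1 else 0).
rewrite (bigD1 (Ordinal (n:=size s) (m:=index x s) ltac:(by rewrite index_mem))) //= eqxx mul1r nth_index //.
rewrite big1 ?addr0 // => i /negbTE; rewrite -val_eqE /= => ->; exact: mul0r.
Qed.

Lemma span_sum (s : seq P) m (G : 'I_m -> P) :
  (forall i, in_span s (G i)) -> in_span s (\sum_i G i).
Proof. by move=> h; apply: big_ind; [exact: span0 | exact: spanD | move=> i _; exact: h]. Qed.

Lemma kerprime (lq : n.-tuple P) : prime_ideal (fun f : P => comp_mpoly lq f = 0).
Proof.
split.
- exact: comp_mpoly0.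
- by move=> f g hf hg; rewrite comp_mpolyD hf hg addr0.
- by move=> r f hf; rewrite (comp_mpoly_is_multiplicative lq).1 hf mulr0.
- by rewrite comp_mpoly1 => /eqP; rewrite oner_eq0.
- move=> f g; rewrite (comp_mpoly_is_multiplicative lq).1 => /eqP.
  by rewrite mulf_eq0 => /orP [] /eqP; [left|right].
Qed.

Lemma decomp (J : P -> Prop) (lq : n.-tuple P) : J 0 ->
  (forall f g, J f -> J g -> J (f + g)) -> (forall r f, J f -> J (r * f)) ->
  (forall i : 'I_n, J ('X_i - comp_mpoly lq 'X_i)) ->
  forall f, J (f - comp_mpoly lq f).
Proof.
move=> J0 JD JM JX.
pose D f := J (f - comp_mpoly lq f).
have DD : forall f g, D f -> D g -> D (f + g).
  move=> f g hf hg; rewrite /D comp_mpolyD.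
  have -> : f + g - (comp_mpoly lq f + comp_mpoly lq g) =
    (f - comp_mpoly lq f) + (g - comp_mpoly lq g) by ring.
  exact: JD.
have DM : forall f g, D f -> D g -> D (f * g).
  move=> f g hf hg; rewrite /D (comp_mpoly_is_multiplicative lq).1.
  have -> : f * g - (comp_mpoly lq f * comp_mpoly lq g) =
    g * (f - comp_mpoly lq f) + comp_mpoly lq f * (g - comp_mpoly lq g) by ring.
  by apply: JD; apply: JM.
have DC : forall c, D c%:MP.
  by move=> c; rewrite /D comp_mpolyC subrr.
have D1 : D 1 by rewrite -mpolyC1.
have DX : forall (i : 'I_n) e, D ('X_i ^+ e).
  move=> i; elim=> [|e IH]; first by rewrite expr0.
  by rewrite exprS; apply: DM.
have Dm : forall m, D 'X_[m].
  move=> m; rewrite mpolyXE_id; apply: (big_ind D D1 DM) => i _; exact: DX.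
elim/mpolyind => [|c m p _ _ hp]; first by rewrite /D comp_mpoly0 subrr.
apply: DD => //; rewrite -mul_mpolyC; exact: DM.
Qed.

Lemma nonQprod (Q : P -> Prop) : prime_ideal Q ->
  forall (r : seq 'I_n) (G : 'I_n -> P), (forall i, i \in r -> ~ Q (G i)) ->
  ~ Q (\prod_(i <- r) G i).
Proof.
case=> _ _ _ Q1 Qp; elim=> [|x r IH] G h; first by rewrite big_nil.
rewrite big_cons => /Qp [].
  by apply: h; rewrite inE eqxx.
by apply: IH => i ir; apply: h; rewrite inE ir orbT.
Qed.

Lemma nonQmonom (Q : P -> Prop) : prime_ideal Q -> forall A : {set 'I_n},
  (forall i, i \in A -> ~ Q 'X_i) -> ~ Q (facet_monom k A).
Proof.
move=> pQ A h; rewrite /facet_monom -big_enum; apply: nonQprod => // i.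
by rewrite mem_enum; apply: h.
Qed.

Lemma monom_id (B C S : {set 'I_n}) : C :&: S \subset B ->
  facet_monom k (~: S) * facet_monom k B =
  facet_monom k C * (facet_monom k (B :\: (C :&: S)) * facet_monom k (~: S :\: C)).
Proof.
move=> sub; rewrite /facet_monom.
rewrite [\prod_(i in B) _](big_setID (C :&: S)) (setIidPr sub).
rewrite [\prod_(i in ~: S) _](big_setID C).
rewrite [\prod_(i in C) _](big_setID S) /=.
have -> : C :\: S = ~: S :&: C by rewrite setDE setIC.
set a := \prod_(i in C :&: S) _; set b := \prod_(i in ~: S :&: C) _.
set c := \prod_(i in ~: S :\: C) _; set d := \prod_(i in B :\: (C :&: S)) _.
ring.
Qed.

End Alg.

Lemma nth_in_take (T : eqType) (x0 : T) (s : seq T) i j :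
  (i < j)%N -> (i < size s)%N -> nth x0 s i \in take j s.
Proof.
move=> ij hs; rewrite -(nth_take x0 ij); apply: mem_nth.
by rewrite size_take_min leq_min ij hs.
Qed.

Lemma nth_notin_take (T : eqType) (x0 : T) (s : seq T) i :
  uniq s -> (i < size s)%N -> nth x0 s i \notin take i s.
Proof.
move=> us hs; have us' := us; rewrite -(cat_take_drop i s) cat_uniq in us'.
move/and3P: us' => [_ /hasPn h _].
have : nth x0 s i \in drop i s.
  by rewrite -[i in nth _ _ i]addn0 -nth_drop mem_nth // size_drop subn_gt0.
by move=> H; apply: h.
Qed.

Lemma take_mono (T : eqType) (s : seq T) i j x :
  (i <= j)%N -> x \in take i s -> x \in take j s.
Proof. by move=> ij; rewrite -(take_takel s ij); apply: mem_take. Qed.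

Theorem mainTheorem8 (k : fieldType) (n : nat) (F : {set {set 'I_n}}) :
  is_tree F ->
  forall Q : {mpoly k[n]} -> Prop,
    prime_ideal Q ->
    (forall f, Q f -> var_ideal f) ->
    (forall f, facet_ideal F f -> Q f) ->
    exists (h : nat) (g : seq {mpoly k[n]}),
      size g = h /\ loc_generates (facet_ideal F) Q g /\ height_ge Q h.
Proof.
move=> [_ [_ leafy]] Q pQ _ IQ.
have pQ' := pQ; case: pQ' => Q0 QD QM Q1 Qp.
pose dec (Pr : Prop) : bool :=
  if ClassicalEpsilon.excluded_middle_informative Pr then true else false.
pose S := [set i : 'I_n | dec (Q 'X_i)].
have inS : forall i, (i \in S) <-> Q 'X_i.
  by move=> i; rewrite inE /dec; case: ClassicalEpsilon.excluded_middle_informative.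
have memF : forall A, A \in F -> facet_ideal F (facet_monom k A).
  by move=> A AF; apply: span_mem; apply: map_f; rewrite mem_enum.
have hS : forall B, B \in F -> B :&: S != set0.
  move=> B BF; apply/negP => /eqP B0.
  apply: (nonQmonom pQ (A := B)); last by apply: IQ; apply: memF.
  move=> i iB Qi; have : i \in B :&: S by rewrite inE iB; apply/(inS i).2.
  by rewrite B0 inE.
have [G' sG' [cG' cov]] := core leafy (leqnn #|F|) (subxx F) hS.
exists #|G'|, [seq facet_monom k A | A <- enum G'].
split; first by rewrite size_map -cardE.
split.
  split.
    move=> x /mapP [A AG ->]; apply: memF; rewrite mem_enum in AG.
    exact: (subsetP sG' A AG).
  move=> f [a ->]; exists (facet_monom k (~: S)).
    apply: nonQmonom => // i; rewrite inE => /negP iS Qi; apply: iS.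
    exact/(inS i).2.
  rewrite mulr_sumr; apply: span_sum => i; rewrite mulrCA; apply: spanM.
  have hi : (i < size (enum F))%N by have := ltn_ord i; rewrite {2}size_map.
  rewrite (nth_map set0) //.
  have BF : nth set0 (enum F) i \in F by rewrite -mem_enum mem_nth.
  have [C CG' CB] := cov _ BF.
  rewrite (@monom_id k n _ _ S CB) mulrC; apply: spanM; apply: span_mem; apply: map_f.
  by rewrite mem_enum.
set h := #|G'|.
pose sq := enum S.
have hle : (h <= size sq)%N by rewrite /sq -cardE.
pose T i := [set j | j \in take i sq].
pose tup i : n.-tuple {mpoly k[n]} := [tuple (if j \in T i then 0 else 'X_j) | j < n].
have compX : forall i (j : 'I_n), comp_mpoly (tup i) 'X_j = if j \in T i then 0 else 'X_j.
  by move=> i j; rewrite comp_mpolyXU -tnth_nth tnth_mktuple.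
have TS : forall i j, j \in T i -> Q 'X_j.
  by move=> i j; rewrite inE => /mem_take; rewrite mem_enum => /inS.
have kerincl : forall i i', (i <= i')%N -> forall f,
    comp_mpoly (tup i) f = 0 -> comp_mpoly (tup i') f = 0.
  move=> i i' ii' f hf.
  case: (kerprime (tup i')) => J0 JD JM _ _.
  have := decomp (J := fun g => comp_mpoly (tup i') g = 0) (lq := tup i) J0 JD JM.
  move=> /(_ _ f); rewrite hf subr0; apply => j.
  rewrite compX; case: ifP => jT.
    by rewrite subr0 compX inE (take_mono ii') //; move: jT; rewrite inE.
  by rewrite subrr; exact: J0.
have Qincl : forall i f, comp_mpoly (tup i) f = 0 -> Q f.
  move=> i f hf; have := decomp (J := Q) (lq := tup i) Q0 QD QM.
  move=> /(_ _ f); rewrite hf subr0; apply => j.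
  rewrite compX; case: ifP => jT; last by rewrite subrr.
  by rewrite subr0; apply: TS jT.
pose c i := fun f : {mpoly k[n]} => if (i < h)%N then comp_mpoly (tup i) f = 0 else Q f.
exists c; split.
- move=> i _; rewrite /c; case: (i < h)%N; [exact: kerprime | exact: pQ].
- move=> i hi; rewrite /c hi; split.
    move=> f hf; case: ltnP => hi1; first exact: kerincl hf.
    exact: Qincl hf.
  have his : (i < size sq)%N by apply: leq_trans hle.
  have n0 : (0 < n)%N.
    have cS : (size sq <= n)%N by rewrite /sq -cardE -[n in (_ <= n)%N]card_ord max_card.
    exact: leq_trans (leq_ltn_trans (leq0n i) his) cS.
  pose x0 : 'I_n := Ordinal n0.
  pose x := nth x0 sq i.
  exists 'X_x; split.
    case: ltnP => _.
      by rewrite compX inE nth_in_take.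
    by apply/inS; rewrite -mem_enum mem_nth.
  rewrite compX inE (negbTE (nth_notin_take x0 (enum_uniq _) his)).
  move/(congr1 (mcoeff (U_(x))%MM)); rewrite mcoeffXU eqxx mcoeff0 => /eqP.
  by rewrite oner_eq0.
- by move=> f; rewrite /c ltnn.
Qed.
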